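(* Let $L\le\mathrm{Aff}(\mathbb{R}^n)$ be a subgroup whose centralizer in $\mathrm{Aff}(\mathbb{R}^n)$ acts transitively on $\mathbb{R}^n$. Then the action of $L$ on $\mathbb{R}^n$ is proper if and only if $L$ is a closed subgroup of $\mathrm{Aff}(\mathbb{R}^n)$.
   Context: $\mathrm{Aff}(\mathbb{R}^n)$ is the Lie group of affine transformations of $\mathbb{R}^n$. An action of a topological group $L$ on a locally compact Hausdorff space $X$ is proper if for every compact $K\subseteq X$ the set $\{\ell\in L\mid \ell K\cap K\neq\emptyset\}$ is compact. *)

(* Defs.v *)
From Stdlib Require Import Reals.
From mathcomp Require Import ssreflect ssrfun ssrbool eqtype ssrnat fintype bigop.

Set Implicit Arguments.
Unset Strict Implicit.

Open Scope R_scope.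

Definition vec (n : nat) := 'I_n -> R.
Definition mat (n : nat) := 'I_n -> 'I_n -> R.

Definition mulmv n (A : mat n) (x : vec n) : vec n :=
  fun i => \big[Rplus/0]_(k < n) (A i k * x k).
Definition mulmm n (A B : mat n) : mat n :=
  fun i j => \big[Rplus/0]_(k < n) (A i k * B k j).
Definition idm n : mat n := fun i j => if i == j then 1 else 0.
Definition addv n (x y : vec n) : vec n := fun i => x i + y i.

Definition invertible n (A : mat n) : Prop :=
  exists B : mat n, mulmm A B = @idm n /\ mulmm B A = @idm n.

(* An affine map x |-> A x + b is represented by the pair (A, b);
   Aff(R^n) is the set of pairs with A invertible. *)
Definition aff n := (mat n * vec n)%type.
Definition is_aff n (g : aff n) : Prop := invertible g.1.
Definition act n (g : aff n) (x : vec n) : vec n := addv (mulmv g.1 x) g.2.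
(* composition: (comp g h) x = g (h x) *)
Definition comp n (g h : aff n) : aff n :=
  (mulmm g.1 h.1, addv (mulmv g.1 h.2) g.2).
Definition aff_id n : aff n := (@idm n, fun _ => 0).

Definition subgroup n (L : aff n -> Prop) : Prop :=
  (forall g, L g -> is_aff g) /\
  L (@aff_id n) /\
  (forall g h, L g -> L h -> L (comp g h)) /\
  (forall g, L g -> exists h, L h /\ comp g h = @aff_id n /\ comp h g = @aff_id n).

Definition centralizer n (L : aff n -> Prop) (h : aff n) : Prop :=
  is_aff h /\ forall l, L l -> comp h l = comp l h.

Definition transitive_on_Rn n (C : aff n -> Prop) : Prop :=
  forall x y : vec n, exists h, C h /\ act h x = y.

(* Standard (Euclidean) topologies, given by sup-norm boxes. *)
Definition ballv n (x : vec n) (e : R) (y : vec n) : Prop :=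
  forall i, Rabs (x i - y i) < e.
Definition balla n (g : aff n) (e : R) (h : aff n) : Prop :=
  (forall i j, Rabs (g.1 i j - h.1 i j) < e) /\ ballv g.2 e h.2.

Definition is_open {X : Type} (ball : X -> R -> X -> Prop) (U : X -> Prop) : Prop :=
  forall x, U x -> exists e, 0 < e /\ forall y, ball x e y -> U y.

Definition compact {X : Type} (ball : X -> R -> X -> Prop) (K : X -> Prop) : Prop :=
  forall (I : Type) (U : I -> X -> Prop),
    (forall i, is_open ball (U i)) ->
    (forall x, K x -> exists i, U i x) ->
    exists l : list I, forall x, K x -> exists i, List.In i l /\ U i x.

Definition proper_action n (L : aff n -> Prop) : Prop :=
  forall K : vec n -> Prop, compact (@ballv n) K ->
    compact (@balla n) (fun l => L l /\ exists x, K x /\ K (act l x)).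

Definition closed_in_Aff n (L : aff n -> Prop) : Prop :=
  forall g, is_aff g -> ~ L g ->
    exists e, 0 < e /\ forall h, is_aff h -> balla g e h -> ~ L h.

(* Main.v *)
From HB Require Import structures.
From Stdlib Require Import Reals Lra Classical ClassicalEpsilon FunctionalExtensionality.
From mathcomp Require Import ssreflect ssrfun ssrbool eqtype ssrnat seq fintype finfun bigop.
From Stdlib Require Import List.
Require Import Defs.
Set Warnings "-notation-overridden".
Set Implicit Arguments.
Unset Strict Implicit.
Open Scope R_scope.

HB.instance Definition _ := Monoid.isComLaw.Build R 0 Rplus
  (fun x y z => esym (Rplus_assoc x y z)) Rplus_comm Rplus_0_l.

Lemma sum_mull n c (F : 'I_n -> R) :
  c * \big[Rplus/0]_(k < n) F k = \big[Rplus/0]_(k < n) (c * F k).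
Proof.
apply: (big_endo (fun x => c * x)).
- move=> x y; ring.
- ring.
Qed.

Lemma sum_mulr n c (F : 'I_n -> R) :
  (\big[Rplus/0]_(k < n) F k) * c = \big[Rplus/0]_(k < n) (F k * c).
Proof.
apply: (big_endo (fun x => x * c)).
- move=> x y; ring.
- ring.
Qed.

Lemma sum_bound n c (F : 'I_n -> R) :
  (forall k, Rabs (F k) <= c) -> Rabs (\big[Rplus/0]_(k < n) F k) <= INR n * c.
Proof.
elim: n F => [|n IH] F H.
- rewrite big_ord0 Rabs_R0 /=. lra.
- rewrite big_ord_recr S_INR /=.
  have := IH (fun k => F (widen_ord (leqnSn n) k)) (fun k => H _).
  have := H ord_max.
  move: (\big[Rplus/0]_(i < n) F (widen_ord (leqnSn n) i)) => s H1 H2.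
  have := Rabs_triang s (F ord_max). rewrite Rmult_plus_distr_r Rmult_1_l. lra.
Qed.

Lemma mulmvA n (A B : mat n) x :
  mulmv (mulmm A B) x = mulmv A (mulmv B x).
Proof.
apply: functional_extensionality => i; rewrite /mulmv /mulmm.
under eq_bigr => k _ do rewrite sum_mulr.
rewrite exchange_big /=.
apply: eq_bigr => m _; rewrite sum_mull.
apply: eq_bigr => k _; ring.
Qed.

Lemma mulmv_add n (A : mat n) x y :
  mulmv A (addv x y) = addv (mulmv A x) (mulmv A y).
Proof.
apply: functional_extensionality => i; rewrite /mulmv /addv -big_split /=.
apply: eq_bigr => k _; ring.
Qed.

Lemma act_comp n (g h : aff n) x : act (comp g h) x = act g (act h x).
Proof.
rewrite /act /comp /= mulmvA mulmv_add.
apply: functional_extensionality => i; rewrite /addv; ring.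
Qed.

Lemma sum_delta n (i : 'I_n) (F : 'I_n -> R) :
  \big[Rplus/0]_(k < n) ((if i == k then 1 else 0) * F k) = F i.
Proof.
rewrite (bigD1 i) //= eqxx big1 => [|k Hk]; first ring.
rewrite eq_sym (negbTE Hk); ring.
Qed.

Lemma sum_delta' n (i : 'I_n) (F : 'I_n -> R) :
  \big[Rplus/0]_(k < n) (F k * (if k == i then 1 else 0)) = F i.
Proof.
rewrite (bigD1 i) //= eqxx big1 => [|k Hk]; first ring.
rewrite (negbTE Hk); ring.
Qed.

Lemma mulmv_id n x : mulmv (@idm n) x = x.
Proof. apply: functional_extensionality => i; exact: sum_delta. Qed.

Lemma act_id n x : act (@aff_id n) x = x.
Proof.
rewrite /act /= mulmv_id; apply: functional_extensionality => i; rewrite /addv; ring.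
Qed.

Definition ev n (i : 'I_n) : vec n := fun k => if k == i then 1 else 0.

Lemma mulmv_ev n (A : mat n) (i j : 'I_n) : mulmv A (ev i) j = A j i.
Proof. exact: sum_delta'. Qed.

Lemma mulmv0 n (A : mat n) j : mulmv A (fun _ => 0) j = 0.
Proof. rewrite /mulmv big1 // => k _; ring. Qed.
Definition ball_space {X : Type} (ball : X -> R -> X -> Prop) :=
  (forall x e, 0 < e -> ball x e x) /\
  (forall x y e, ball x e y -> ball y e x) /\
  (forall x y z e1 e2, ball x e1 y -> ball y e2 z -> ball x (e1 + e2) z) /\
  (forall x y e1 e2, e1 <= e2 -> ball x e1 y -> ball x e2 y) /\
  (forall x y, x <> y -> exists e, 0 < e /\ ~ ball x e y) /\
  (forall x y, exists e, ball x e y).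

Definition interior {X : Type} (ball : X -> R -> X -> Prop) p r y :=
  exists e, 0 < e /\ forall z, ball y e z -> ball p r z.

Lemma interior_open {X : Type} (ball : X -> R -> X -> Prop) p r :
  ball_space ball -> is_open ball (interior ball p r).
Proof.
move=> [Hr [Hs [Ht [Hm _]]]] y [e [He Hy]].
exists (e / 2); split; first lra.
move=> y' Hy'; exists (e / 2); split; first lra.
move=> z Hz; apply: Hy; apply: (Hm _ _ (e/2 + e/2)); first lra.
exact: Ht Hy' Hz.
Qed.

Lemma interior_in {X : Type} (ball : X -> R -> X -> Prop) p r :
  ball_space ball -> 0 < r -> interior ball p r p.
Proof. move=> _ Hr; exists r; split => //. Qed.

Lemma interior_ball {X : Type} (ball : X -> R -> X -> Prop) p r y :
  ball_space ball -> interior ball p r y -> ball p r y.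
Proof. move=> [Hr _] [e [He H]]; exact: H (Hr _ _ He). Qed.

Lemma list_min (A : Type) (f : A -> R) (l : list A) :
  exists m, 0 < m /\ forall a, In a l -> 0 < f a -> m <= f a.
Proof.
elim: l => [|a l [m [Hm H]]]; first by exists 1; split => //; lra.
case: (Rlt_le_dec 0 (f a)) => Ha.
- exists (Rmin m (f a)); split; first by apply: Rmin_pos.
  move=> b [<-|Hb] Hfb; first exact: Rmin_r.
  apply: Rle_trans (Rmin_l _ _) (H _ Hb Hfb).
- exists m; split => // b [<-|Hb] Hfb; first lra.
  exact: H.
Qed.

Lemma list_max (A : Type) (f : A -> R) (l : list A) :
  exists M, forall a, In a l -> f a <= M.
Proof.
elim: l => [|a l [M H]]; first by exists 0.
exists (Rmax M (f a)) => b [<-|Hb]; first exact: Rmax_r.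
apply: Rle_trans (H _ Hb) (Rmax_l _ _).
Qed.

Lemma compact_closed {X : Type} (ball : X -> R -> X -> Prop) K p :
  ball_space ball -> compact ball K ->
  (forall e, 0 < e -> exists x, K x /\ ball p e x) -> K p.
Proof.
move=> Hb HK Hp; apply: NNPP => HKp.
move: (Hb) => [Hr [Hs [Ht [Hm [Hsep _]]]]].
pose U := fun (e : R) x => 0 < e /\ exists e', e < e' /\ ~ ball p e' x.
have HU : forall e, is_open ball (U e).
  move=> e x [He [e' [He' Hn]]].
  exists ((e' - e) / 2); split; first lra.
  move=> y Hy; split => //; exists (e + (e' - e) / 2); split; first lra.
  move=> Hpy; apply: Hn; apply: (Hm _ _ (e + (e' - e) / 2 + (e' - e) / 2)); first lra.
  exact: Ht Hpy (Hs _ _ _ Hy).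
have Hc : forall x, K x -> exists e, U e x.
  move=> x Kx.
  have Hne : p <> x by move=> E; apply: HKp; rewrite E.
  have [e0 [He0 Hn]] := Hsep _ _ Hne.
  exists (e0 / 2); split; first lra.
  exists e0; split => //; lra.
have [l Hl] := HK R U HU Hc.
have [m [Hm0 Hml]] := list_min id l.
have [x [Kx Hx]] := Hp m Hm0.
have [e [Hel [He [e' [He' Hn]]]]] := Hl x Kx.
apply: Hn; apply: (Hm _ _ m) => //.
have := Hml e Hel He; rewrite /=; lra.
Qed.

Lemma compact_bounded {X : Type} (ball : X -> R -> X -> Prop) K p :
  ball_space ball -> compact ball K -> exists r, forall x, K x -> ball p r x.
Proof.
move=> Hb HK.
move: (Hb) => [Hr [Hs [Ht [Hm [Hsep Hex]]]]].
have Hc : forall x, K x -> exists r, interior ball p r x.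
  move=> x _; have [e0 He0] := Hex p x.
  exists (e0 + 1); exists 1; split; first lra.
  move=> z Hz; exact: Ht He0 Hz.
have [l Hl] := HK R (interior ball p) (fun r => @interior_open _ ball p r Hb) Hc.
have [M HM] := list_max id l.
exists M => x Kx; have [r [Hrl Hx]] := Hl x Kx.
apply: (Hm _ _ r); first exact: HM.
exact: interior_ball Hb Hx.
Qed.

Lemma cluster {X : Type} (ball : X -> R -> X -> Prop) K (Q : R -> X -> Prop) :
  ball_space ball -> compact ball K ->
  (forall e, 0 < e -> exists x, Q e x) ->
  (forall e x, Q e x -> K x) ->
  (forall e1 e2 x, e1 <= e2 -> Q e1 x -> Q e2 x) ->
  exists p, forall e d, 0 < e -> 0 < d -> exists x, Q e x /\ ball p d x.
Proof.
move=> Hb HK Hne HQK HQm; apply: NNPP => Hn.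
move: (Hb) => [Hr [Hs [Ht [Hm [Hsep Hex]]]]].
pose U := fun (t : X * R * R) z =>
  (0 < t.1.2 /\ 0 < t.2 /\ ~ (exists x, Q t.1.2 x /\ ball t.1.1 t.2 x)) /\
  interior ball t.1.1 t.2 z.
have HU : forall t, is_open ball (U t).
  move=> t z [Ht0 Hz]; have [e [He H]] := @interior_open _ ball t.1.1 t.2 Hb z Hz.
  exists e; split => // y Hy; split => //; exact: H.
have Hc : forall x, K x -> exists t, U t x.
  move=> x _.
  have [e [d [He [Hd H]]]] : exists e d, 0 < e /\ 0 < d /\
     ~ (exists y, Q e y /\ ball x d y).
    apply: NNPP => H; apply: Hn; exists x => e d He Hd.
    apply: NNPP => H'; apply: H; exists e, d; tauto.
  exists (x, e, d); split; first by rewrite /=; tauto.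
  exact: interior_in.
have [l Hl] := HK _ U HU Hc.
have [m [Hm0 Hml]] := list_min (fun t : X * R * R => t.1.2) l.
have [x Hx] := Hne m Hm0.
have [t [Htl [[He [Hd Hno]] Hint]]] := Hl x (HQK _ _ Hx).
apply: Hno; exists x; split.
- apply: HQm Hx; exact: Hml.
- exact: interior_ball Hb Hint.
Qed.

Fixpoint somes (I : Type) (l : list (option I)) : list I :=
  match l with
  | nil => nil
  | Some i :: l => i :: somes l
  | None :: l => somes l
  end.

Lemma in_somes (I : Type) (l : list (option I)) i : In (Some i) l -> In i (somes l).
Proof.
elim: l => [|[j|] l IH] //= [E|H].
- by left; case: E.
- by right; apply: IH.
- done.
- exact: IH.
Qed.

Lemma compact_sub {X : Type} (ball : X -> R -> X -> Prop) K S :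
  ball_space ball -> compact ball K -> (forall x, S x -> K x) ->
  (forall p, (forall e, 0 < e -> exists x, S x /\ ball p e x) -> S p) ->
  compact ball S.
Proof.
move=> Hb HK HSK HScl I U HU Hc.
pose U' := fun (o : option I) x => match o with Some i => U i x | None => ~ S x end.
have HU' : forall o, is_open ball (U' o).
  case=> [i|]; first exact: HU.
  move=> x Hx /=.
  apply: NNPP => H; apply: Hx; apply: HScl => e He.
  apply: NNPP => H'; apply: H; exists e; split => // y Hy Sy; apply: H'.
  by exists y.
have Hc' : forall x, K x -> exists o, U' o x.
  move=> x Kx; case: (classic (S x)) => Sx.
  - by have [i Hi] := Hc x Sx; exists (Some i).
  - by exists None.
have [l Hl] := HK _ U' HU' Hc'.
exists (somes l) => x Sx.
have [[i|] [Hin Hx]] := Hl x (HSK _ Sx) => //.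
by exists i; split => //; apply: in_somes.
Qed.

Lemma In_of_mem (T : eqType) (x : T) (s : list T) : x \in s -> In x s.
Proof.
elim: s => [|y s IH] //=; rewrite seq.in_cons => /orP [/eqP ->|H]; first by left.
by right; apply: IH.
Qed.

Lemma fin_bound (T : finType) (F : T -> R) : exists M, forall t, F t <= M.
Proof.
have [M HM] := list_max F (enum T).
exists M => t; apply: HM; apply: In_of_mem; by rewrite mem_enum.
Qed.

Definition ballT (T : finType) (u : T -> R) e (v : T -> R) :=
  forall t, Rabs (u t - v t) < e.

Lemma ballT_space (T : finType) : ball_space (@ballT T).
Proof.
split; [|split; [|split; [|split; [|split]]]].
- move=> x e He t; rewrite Rminus_diag Rabs_R0 //.
- move=> x y e H t; rewrite Rabs_minus_sym; exact: H.
- move=> x y z e1 e2 H1 H2 t.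
  have := Rabs_triang (x t - y t) (y t - z t).
  have := H1 t; have := H2 t.
  have -> : x t - y t + (y t - z t) = x t - z t by ring.
  lra.
- move=> x y e1 e2 He H t; have := H t; lra.
- move=> x y Hxy.
  have [t Ht] : exists t, x t <> y t.
    apply: NNPP => H; apply: Hxy; apply: functional_extensionality => t.
    apply: NNPP => H'; apply: H; by exists t.
  exists (Rabs (x t - y t)); split.
  + apply: Rabs_pos_lt; lra.
  + move=> H; have := H t; lra.
- move=> x y; have [M HM] := fin_bound (fun t => Rabs (x t - y t)).
  exists (M + 1) => t; have := HM t; lra.
Qed.

Definition cube (T : finType) (a : T -> R) w (u : T -> R) :=
  forall t, a t <= u t <= a t + w.

Definition FC (T : finType) (I : Type) (U : I -> (T -> R) -> Prop) a w :=
  exists l : list I, forall u, cube a w u -> exists i, In i l /\ U i u.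

Definition shift (T : finType) (a : T -> R) w (s : {ffun T -> bool}) : T -> R :=
  fun t => a t + (if s t then w / 2 else 0).

Lemma split_cube (T : finType) (I : Type) (U : I -> (T -> R) -> Prop) a w :
  (forall s, FC U (shift a w s) (w / 2)) -> FC U a w.
Proof.
move=> H.
pose fl := fun s => proj1_sig (constructive_indefinite_description _ (H s)).
have Hfl : forall s u, cube (shift a w s) (w / 2) u -> exists i, In i (fl s) /\ U i u.
  move=> s; exact: (proj2_sig (constructive_indefinite_description _ (H s))).
exists (concat (map fl (enum {ffun T -> bool}))) => u Hu.
pose s := [ffun t => if Rlt_dec (a t + w / 2) (u t) then true else false].
have Hs : cube (shift a w s) (w / 2) u.
  move=> t; rewrite /shift /s ffunE; have := Hu t.
  case: (Rlt_dec (a t + w / 2) (u t)) => H1 H2 /=; split; lra.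
have [i [Hi HU]] := Hfl s u Hs.
exists i; split => //.
apply/in_concat; exists (fl s); split => //.
apply: in_map; apply: In_of_mem; by rewrite mem_enum.
Qed.

Definition nxt_prop (T : finType) (I : Type) (U : I -> (T -> R) -> Prop) a w a' :=
  (~ FC U a w -> ~ FC U a' (w / 2)) /\
  forall t, a t <= a' t /\ a' t + w / 2 <= a t + w.

Lemma nxt_ex (T : finType) (I : Type) (U : I -> (T -> R) -> Prop) a w :
  0 <= w -> exists a', nxt_prop U a w a'.
Proof.
move=> Hw; case: (classic (FC U a w)) => H.
- exists a; split => // t; lra.
- have [s Hs] : exists s, ~ FC U (shift a w s) (w / 2).
    apply: NNPP => H'; apply: H; apply: split_cube => s.
    apply: NNPP => H''; apply: H'; by exists s.
  exists (shift a w s); split => // t; rewrite /shift; case: (s t); lra.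
Qed.

Definition nxt (T : finType) (I : Type) (U : I -> (T -> R) -> Prop) a w :=
  epsilon (inhabits a) (nxt_prop U a w).

Fixpoint seqa (T : finType) (I : Type) (U : I -> (T -> R) -> Prop) a0 w0 k :=
  match k with
  | O => a0
  | S k => nxt U (seqa U a0 w0 k) (w0 / 2 ^ k)
  end.

Lemma INR_le_pow2 k : INR k <= 2 ^ k.
Proof.
elim: k => [|k IH]; first by rewrite /=; lra.
rewrite S_INR /=; have : 1 <= 2 ^ k by apply: pow_R1_Rle; lra.
lra.
Qed.

Lemma heine_borel_cube (T : finType) a0 w0 :
  0 <= w0 -> compact (@ballT T) (cube a0 w0).
Proof.
move=> Hw0 I U HU Hc; apply: NNPP => Hn.
pose wk := fun k : nat => w0 / 2 ^ k.
have Hwk : forall k, 0 <= wk k.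
  move=> k; rewrite /wk; apply: Rmult_le_pos => //.
  apply: Rlt_le; apply: Rinv_0_lt_compat; apply: pow_lt; lra.
have HwS : forall k, wk k / 2 = wk k.+1.
  move=> k; rewrite /wk /=; field; apply: pow_nonzero; lra.
pose sa := seqa U a0 w0.
have Hspec : forall k, nxt_prop U (sa k) (wk k) (sa k.+1).
  move=> k; rewrite /sa /= /nxt /wk; apply: epsilon_spec; apply: nxt_ex; exact: Hwk.
have Hnfc : forall k, ~ FC U (sa k) (wk k).
  elim=> [|k IH].
  - rewrite /sa /wk /= Rdiv_1_r; exact: Hn.
  - rewrite -HwS; exact: (proj1 (Hspec k)).
have Hmono : forall k m t, (k <= m)%N ->
    sa k t <= sa m t /\ sa m t + wk m <= sa k t + wk k.
  move=> k m t; elim: m => [|m IH].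
  - rewrite leqn0 => /eqP ->; lra.
  - rewrite leq_eqVlt => /orP [/eqP ->|Hkm]; first lra.
    have := IH Hkm; have := proj2 (Hspec m) t; rewrite -HwS; lra.
have Hall : forall m k t, sa m t <= sa k t + wk k.
  move=> m k t; case: (leqP m k) => H.
  - have := Hmono m k t H; have := Hwk k; lra.
  - have := Hmono k m t (ltnW H); have := Hwk m; lra.
pose E := fun t x => exists m, x = sa m t.
have Hb : forall t, bound (E t).
  move=> t; exists (sa O t + wk O) => x [m ->]; exact: Hall.
have He : forall t, exists x, E t x by move=> t; exists (sa O t), O.
pose p := fun t => proj1_sig (completeness (E t) (Hb t) (He t)).
have Hp : forall t, is_lub (E t) (p t).
  move=> t; exact: (proj2_sig (completeness (E t) (Hb t) (He t))).
have Hpk : forall k t, sa k t <= p t <= sa k t + wk k.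
  move=> k t; split.
  - apply: (proj1 (Hp t)); by exists k.
  - apply: (proj2 (Hp t)) => x [m ->]; exact: Hall.
have Hp0 : cube a0 w0 p.
  move=> t; have := Hpk O t; rewrite /sa /wk /= Rdiv_1_r; lra.
have [i Hi] := Hc p Hp0.
have [e [He0 HUi]] := HU i p Hi.
have [k Hk] := INR_archimed e w0 He0.
have Hwke : wk k < e.
  have HP : 0 < 2 ^ k by apply: pow_lt; lra.
  rewrite /wk /Rdiv; apply: (Rmult_lt_reg_r (2 ^ k)) => //.
  rewrite Rmult_assoc Rinv_l; last lra.
  rewrite Rmult_1_r; have := INR_le_pow2 k; nra.
apply: (Hnfc k); exists (i :: nil) => u Hu; exists i; split; first by left.
apply: HUi => t; have := Hpk k t; have := Hu t.
move=> H1 H2; apply: Rle_lt_trans Hwke; apply: Rabs_le; lra.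
Qed.

Lemma compact_eq {X : Type} (ball : X -> R -> X -> Prop) (K K' : X -> Prop) :
  (forall x, K x <-> K' x) -> compact ball K -> compact ball K'.
Proof.
move=> H HK I U HU Hc.
have [l Hl] := HK I U HU (fun x Kx => Hc x (proj1 (H x) Kx)).
exists l => x Kx; exact: Hl x (proj2 (H x) Kx).
Qed.

Definition boxT (T : finType) B (u : T -> R) := forall t, Rabs (u t) <= B.

Lemma compact_boxT (T : finType) B : 0 <= B -> compact (@ballT T) (boxT B).
Proof.
move=> HB; apply: (compact_eq (K := cube (fun _ => - B) (2 * B))).
- move=> u; split => H t.
  + have := H t; move=> [H1 H2]; apply: Rabs_le; lra.
  + have := H t; have := Rle_abs (u t); have := Rle_abs (- u t); rewrite Rabs_Ropp.
    move=> *; split; lra.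
- apply: heine_borel_cube; lra.
Qed.

Lemma ball_space_transport {X Y : Type} (f : X -> Y) bX bY :
  (forall x e y, bX x e y <-> bY (f x) e (f y)) -> (forall x y, f x = f y -> x = y) ->
  ball_space bY -> ball_space bX.
Proof.
move=> Hf Hinj [Hr [Hs [Ht [Hm [Hsep Hex]]]]].
split; [|split; [|split; [|split; [|split]]]].
- move=> x e He; apply/Hf; exact: Hr.
- move=> x y e H; apply/Hf; apply: Hs; exact/Hf.
- move=> x y z e1 e2 H1 H2; apply/Hf; apply: Ht (proj1 (Hf _ _ _) H1) (proj1 (Hf _ _ _) H2).
- move=> x y e1 e2 He H; apply/Hf; apply: Hm He (proj1 (Hf _ _ _) H).
- move=> x y Hxy; have Hne : f x <> f y by move=> E; apply: Hxy; exact: Hinj.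
  have [e [He Hn]] := Hsep _ _ Hne; exists e; split => // H; apply: Hn; exact/Hf.
- move=> x y; have [e He] := Hex (f x) (f y); exists e; exact/Hf.
Qed.

Lemma compact_transport {X Y : Type} (f : X -> Y) bX bY KX KY :
  (forall x e y, bX x e y <-> bY (f x) e (f y)) -> (forall x y, f x = f y -> x = y) ->
  (forall y, exists x, f x = y) -> (forall x, KX x <-> KY (f x)) ->
  compact bY KY -> compact bX KX.
Proof.
move=> Hf Hinj Hsurj HK HcY I U HU Hc.
pose V := fun i y => exists x, f x = y /\ U i x.
have HV : forall i, is_open bY (V i).
  move=> i y [x [<- Hx]]; have [e [He H]] := HU i x Hx.
  exists e; split => // y' Hy'; have [x' Ex'] := Hsurj y'.
  exists x'; split => //; apply: H; apply/Hf; by rewrite Ex'.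
have HcV : forall y, KY y -> exists i, V i y.
  move=> y Ky; have [x Ex] := Hsurj y; rewrite -Ex in Ky.
  have [i Hi] := Hc x (proj2 (HK x) Ky); exists i; by exists x.
have [l Hl] := HcY I V HV HcV.
exists l => x Kx; have [i [Hil [x' [E Hx']]]] := Hl (f x) (proj1 (HK x) Kx).
exists i; split => //; by rewrite -(Hinj _ _ E).
Qed.

Definition affT n := ('I_n * 'I_n + 'I_n)%type.

Definition fb n (g : aff n) : affT n -> R :=
  fun t => match t with inl (i, j) => g.1 i j | inr i => g.2 i end.

Lemma balla_fb n (g : aff n) e h : balla g e h <-> ballT (fb g) e (fb h).
Proof.
split.
- move=> [H1 H2] [[i j]|i] /=; [exact: H1 | exact: H2].
- move=> H; split; [move=> i j; exact: (H (inl (i, j))) | move=> i; exact: (H (inr i))].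
Qed.

Lemma fb_inj n (g h : aff n) : fb g = fb h -> g = h.
Proof.
case: g => [A b]; case: h => [A' b'] E.
have E1 : A = A'.
  apply: functional_extensionality => i; apply: functional_extensionality => j.
  exact: (f_equal (fun F => F (inl (i, j))) E).
have E2 : b = b'.
  apply: functional_extensionality => i; exact: (f_equal (fun F => F (inr i)) E).
by rewrite E1 E2.
Qed.

Lemma fb_surj n (u : affT n -> R) : exists g, fb g = u.
Proof.
exists (fun i j => u (inl (i, j)), fun i => u (inr i)).
by apply: functional_extensionality => [[[i j]|i]].
Qed.

Lemma balla_space n : ball_space (@balla n).
Proof.
apply: (ball_space_transport (f := @fb n)).
- move=> x e y; exact: balla_fb.
- move=> x y; exact: fb_inj.
- exact: ballT_space.
Qed.

Lemma ballv_space n : ball_space (@ballv n).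
Proof. exact: ballT_space. Qed.

Definition boxA n B (g : aff n) :=
  (forall i j, Rabs (g.1 i j) <= B) /\ (forall i, Rabs (g.2 i) <= B).

Lemma compact_boxA n B : 0 <= B -> compact (@balla n) (boxA B).
Proof.
move=> HB; apply: (compact_transport (f := @fb n) (bY := @ballT _) (KY := boxT B)).
- move=> x e y; exact: balla_fb.
- move=> x y; exact: fb_inj.
- exact: fb_surj.
- move=> g; split.
  + move=> [H1 H2] [[i j]|i] /=; [exact: H1 | exact: H2].
  + move=> H; split; [move=> i j; exact: (H (inl (i, j))) | move=> i; exact: (H (inr i))].
- exact: compact_boxT.
Qed.

Lemma compact_boxV n B : 0 <= B -> compact (@ballv n) (fun x => forall i, Rabs (x i) <= B).
Proof. exact: compact_boxT. Qed.

Lemma act0 n (g : aff n) : act g (fun _ => 0) = g.2.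
Proof.
apply: functional_extensionality => j; rewrite /act /addv mulmv0; ring.
Qed.

Lemma dir1 n (L : aff n -> Prop) : subgroup L -> proper_action L -> closed_in_Aff L.
Proof.
move=> HL Hp g Hg HnL; apply: NNPP => Hn.
have Hnear : forall e, 0 < e -> exists h, L h /\ balla g e h.
  move=> e He; apply: NNPP => H; apply: Hn; exists e; split => // h _ Hh Lh.
  apply: H; exists h; tauto.
have [M HM] := fin_bound (fun i : 'I_n => Rabs (g.2 i)).
pose B := Rmax 0 M + 1.
pose K := fun x : vec n => forall i, Rabs (x i) <= B.
have HK : compact (@ballv n) K.
  apply: compact_boxV; have := Rmax_l 0 M; rewrite /B; lra.
have HS := Hp K HK.
apply: HnL.
suff : L g /\ exists x, K x /\ K (act g x) by case.
apply: (compact_closed (balla_space n) HS) => e He.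
have [h [Lh Hh]] := Hnear (Rmin e 1) (Rmin_pos _ _ He Rlt_0_1).
exists h; split.
- split => //; exists (fun _ => 0); split.
  + move=> i; rewrite Rabs_R0 /B; have := Rmax_l 0 M; lra.
  + rewrite act0 => i; have := (proj2 Hh) i; have := HM i; have := Rmax_r 0 M.
    have := Rmin_r e 1; have := Rabs_triang_inv (h.2 i) (g.2 i).
    rewrite Rabs_minus_sym /B /=; lra.
- apply: (proj1 (proj2 (proj2 (proj2 (balla_space n)))) _ _ (Rmin e 1)) => //.
  exact: Rmin_l.
Qed.

Lemma comm_act n (L : aff n -> Prop) h l x :
  centralizer L h -> L l -> act l (act h x) = act h (act l x).
Proof. move=> [_ Hc] Ll; by rewrite -!act_comp Hc. Qed.

Lemma act_ev n (g : aff n) i j : act g (ev i) j = g.1 j i + g.2 j.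
Proof. by rewrite /act /addv mulmv_ev. Qed.

Lemma lin_part n (L : aff n -> Prop) h l i j :
  centralizer L h -> L l -> act h (fun _ => 0) = ev i ->
  l.1 j i = act h l.2 j - l.2 j.
Proof.
move=> Hh Ll Hi.
have := act_ev l i j; rewrite -Hi (comm_act _ Hh Ll) act0 => ->; ring.
Qed.

Lemma mv_bound n (A : mat n) (y : vec n) a c j :
  (forall j k, Rabs (A j k) <= a) -> (forall k, Rabs (y k) <= c) ->
  Rabs (mulmv A y j) <= INR n * (a * c).
Proof.
move=> HA Hy; apply: sum_bound => k; rewrite Rabs_mult.
apply: Rmult_le_compat; [exact: Rabs_pos | exact: Rabs_pos | exact: HA | exact: Hy].
Qed.

Lemma sum_sub n (F G : 'I_n -> R) :
  \big[Rplus/0]_(k < n) (F k - G k) =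
  \big[Rplus/0]_(k < n) F k - \big[Rplus/0]_(k < n) G k.
Proof.
rewrite /Rminus big_split /=; congr (_ + _).
apply: esym; apply: (big_endo Ropp) => [x y|]; ring.
Qed.

Lemma sum_close n (u v u' v' : 'I_n -> R) M d :
  (forall k, Rabs (v k) <= M) -> (forall k, Rabs (u' k) <= M) ->
  (forall k, Rabs (u k - u' k) < d) -> (forall k, Rabs (v k - v' k) < d) ->
  Rabs (\big[Rplus/0]_(k < n) (u k * v k) - \big[Rplus/0]_(k < n) (u' k * v' k))
    <= INR n * (2 * M * d).
Proof.
move=> Hv Hu' Hu Hvv; rewrite -sum_sub; apply: sum_bound => k.
have -> : u k * v k - u' k * v' k = (u k - u' k) * v k + u' k * (v k - v' k) by ring.
apply: Rle_trans (Rabs_triang _ _) _; rewrite !Rabs_mult.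
have H1 : Rabs (u k - u' k) * Rabs (v k) <= d * M.
  apply: Rmult_le_compat; [exact: Rabs_pos | exact: Rabs_pos | exact: Rlt_le | exact: Hv].
have H2 : Rabs (u' k) * Rabs (v k - v' k) <= M * d.
  apply: Rmult_le_compat; [exact: Rabs_pos | exact: Rabs_pos | exact: Hu' | exact: Rlt_le].
lra.
Qed.

Lemma vmax (T : Type) (f : T -> R) (l : list T) :
  (forall a, 0 <= f a) ->
  exists Y, 0 <= Y /\ (forall a, In a l -> f a <= Y) /\ (Y = 0 \/ exists a, Y = f a).
Proof.
move=> Hf; elim: l => [|a l [Y [HY [Hl HYe]]]].
- exists 0; split; first lra; split => //; by left.
- case: (Rle_dec (f a) Y) => Ha.
  + exists Y; split => //; split => //; move=> b [<-|Hb] //; exact: Hl.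
  + exists (f a); split => //; split; last by right; exists a.
    move=> b [<-|Hb]; first lra; have := Hl b Hb; lra.
Qed.

Lemma vmaxv n (y : vec n) :
  exists Y, 0 <= Y /\ (forall k, Rabs (y k) <= Y) /\ (Y = 0 \/ exists k, Y = Rabs (y k)).
Proof.
have [Y [HY [Hl HYe]]] := @vmax _ (fun k => Rabs (y k)) (enum 'I_n) (fun k => Rabs_pos _).
exists Y; split => //; split => // k; apply: Hl; apply: In_of_mem; by rewrite mem_enum.
Qed.

Lemma act_close n (a a' : aff n) x x' M d :
  (forall j k, Rabs (a'.1 j k) <= M) -> (forall k, Rabs (x k) <= M) ->
  balla a d a' -> ballv x d x' ->
  ballv (act a x) (INR n * (2 * M * d) + d) (act a' x').
Proof.
move=> Ha' Hx [H1 H2] Hxx j; rewrite /act /addv /mulmv.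
have -> : \big[Rplus/0]_(k < n) (a.1 j k * x k) + a.2 j -
   (\big[Rplus/0]_(k < n) (a'.1 j k * x' k) + a'.2 j) =
   (\big[Rplus/0]_(k < n) (a.1 j k * x k) - \big[Rplus/0]_(k < n) (a'.1 j k * x' k))
   + (a.2 j - a'.2 j) by ring.
apply: Rle_lt_trans (Rabs_triang _ _) _.
have := sum_close (u := fun k => a.1 j k) (v := x) (u' := fun k => a'.1 j k) (v' := x')
   Hx (fun k => Ha' j k) (fun k => H1 j k) Hxx.
have := H2 j; lra.
Qed.

Lemma comp_close n (a a' b b' : aff n) M d :
  0 < d -> boxA M a' -> boxA M b ->
  balla a d a' -> balla b d b' ->
  balla (comp a b) (INR n * (2 * M * d) + d) (comp a' b').
Proof.
move=> Hd [Ha1 Ha2] [Hb1 Hb2] [H1 H2] [H3 H4]; split.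
- move=> i j; rewrite /comp /mulmm /=.
  have := sum_close (u := fun k => a.1 i k) (v := fun k => b.1 k j)
     (u' := fun k => a'.1 i k) (v' := fun k => b'.1 k j)
     (fun k => Hb1 k j) (fun k => Ha1 i k) (fun k => H1 i k) (fun k => H3 k j).
  move=> H; apply: Rle_lt_trans H _; lra.
- move=> i; rewrite /comp /=.
  have := @act_close n a a' b.2 b'.2 M d Ha1 Hb2 (conj H1 H2) H4 i.
  by rewrite /act.
Qed.

Lemma close_eq {X : Type} (ball : X -> R -> X -> Prop) g h c :
  ball_space ball -> 0 <= c -> (forall d, 0 < d -> ball g (c * d + d) h) -> g = h.
Proof.
move=> [_ [_ [_ [Hm [Hsep _]]]]] Hc H; apply: NNPP => Hne.
have [e [He Hn]] := Hsep _ _ Hne; apply: Hn.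
have Hd : 0 < e / (c + 1) by apply: Rdiv_lt_0_compat; lra.
apply: (Hm _ _ _ _ _ (H _ Hd)); right; field; lra.
Qed.

Lemma abs3 a b c : Rabs (a + b - c) <= Rabs a + Rabs b + Rabs c.
Proof.
have := Rabs_triang (a + b) (- c); rewrite Rabs_Ropp; have := Rabs_triang a b.
rewrite /Rminus; lra.
Qed.

Lemma abs2m a b : Rabs (a - b) <= Rabs a + Rabs b.
Proof. have := Rabs_triang a (- b); rewrite Rabs_Ropp /Rminus; lra. Qed.

Lemma cid_spec (A : Type) (P : A -> Prop) (H : exists x, P x) :
  P (proj1_sig (constructive_indefinite_description P H)).
Proof. exact: proj2_sig. Qed.

Lemma dir2_bound n (L : aff n -> Prop) (K : vec n -> Prop) :
  subgroup L -> transitive_on_Rn (centralizer L) -> compact (@ballv n) K ->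
  exists Bst, 0 <= Bst /\ forall l, L l -> forall x, K x -> K (act l x) -> boxA Bst l.
Proof.
move=> HL HC HK.
have Hhs : forall i : 'I_n, exists h, centralizer L h /\ act h (fun _ => 0) = ev i.
  move=> i; exact: HC.
pose hs := fun i => proj1_sig (constructive_indefinite_description _ (Hhs i)).
have Hhs' : forall i, centralizer L (hs i) /\ act (hs i) (fun _ => 0) = ev i.
  move=> i; exact: (cid_spec (Hhs i)).
have [H1 HH1] := fin_bound (fun t : 'I_n * 'I_n * 'I_n => Rabs ((hs t.1.1).1 t.1.2 t.2)).
have [H2 HH2] := fin_bound (fun t : 'I_n * 'I_n => Rabs ((hs t.1).2 t.2)).
pose al := Rmax 0 (Rmax H1 H2).
have Hal0 : 0 <= al := Rmax_l _ _.
have Hal1 : forall i j k, Rabs ((hs i).1 j k) <= al.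
  move=> i j k; have := HH1 (i, j, k); have := Rmax_l H1 H2; have := Rmax_r 0 (Rmax H1 H2).
  rewrite /al /=; lra.
have Hal2 : forall i j, Rabs ((hs i).2 j) <= al.
  move=> i j; have := HH2 (i, j); have := Rmax_r H1 H2; have := Rmax_r 0 (Rmax H1 H2).
  rewrite /al /=; lra.
pose be := INR n * al + 1.
have Hbe : 1 <= be by have := pos_INR n; rewrite /be; nra.
have Hlin : forall l Y, L l -> (forall k, Rabs (l.2 k) <= Y) ->
    forall j i, Rabs (l.1 j i) <= al + be * Y.
  move=> l Y Ll HY j i.
  rewrite (lin_part j (proj1 (Hhs' i)) Ll (proj2 (Hhs' i))) /act /addv.
  apply: Rle_trans (abs3 _ _ _) _.
  have := @mv_bound n (hs i).1 l.2 al Y j (Hal1 i) HY.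
  have := Hal2 i j; have := HY j; rewrite /be; lra.
have [RK0 HRK0] := compact_bounded (fun _ => 0) (ballv_space n) HK.
pose RK := Rmax 0 RK0.
have HRK : 0 <= RK := Rmax_l _ _.
have HKb : forall x, K x -> forall i, Rabs (x i) <= RK.
  move=> x Kx i; have := HRK0 x Kx i; rewrite Rminus_0_l Rabs_Ropp.
  have := Rmax_r 0 RK0; rewrite /RK; lra.
have Hpt : forall p : vec n, exists h, centralizer L h /\ act h (fun _ => 0) = p.
  move=> p; exact: HC.
pose hp := fun p => proj1_sig (constructive_indefinite_description _ (Hpt p)).
have Hhp : forall p, centralizer L (hp p) /\ act (hp p) (fun _ => 0) = p.
  move=> p; exact: (cid_spec (Hpt p)).
have Hinv : forall p, exists Bm : mat n, mulmm Bm (hp p).1 = @idm n.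
  move=> p; have [[Bm [_ E]] _] := proj1 (Hhp p); by exists Bm.
pose Bm := fun p => proj1_sig (constructive_indefinite_description _ (Hinv p)).
have HBm : forall p, mulmm (Bm p) (hp p).1 = @idm n.
  move=> p; exact: (cid_spec (Hinv p)).
have Hbnd : forall p, exists b, 0 <= b /\ (forall j k, Rabs (Bm p j k) <= b) /\
    (forall j, Rabs ((hp p).2 j) <= b).
  move=> p.
  have [b1 Hb1] := fin_bound (fun t : 'I_n * 'I_n => Rabs (Bm p t.1 t.2)).
  have [b2 Hb2] := fin_bound (fun t : 'I_n => Rabs ((hp p).2 t)).
  exists (Rmax 0 (Rmax b1 b2)); split; first exact: Rmax_l.
  split.
  + move=> j k; have := Hb1 (j, k); have := Rmax_l b1 b2; have := Rmax_r 0 (Rmax b1 b2).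
    rewrite /=; lra.
  + move=> j; have := Hb2 j; have := Rmax_r b1 b2; have := Rmax_r 0 (Rmax b1 b2); lra.
pose bb := fun p => proj1_sig (constructive_indefinite_description _ (Hbnd p)).
have Hbb : forall p, 0 <= bb p /\ (forall j k, Rabs (Bm p j k) <= bb p) /\
    (forall j, Rabs ((hp p).2 j) <= bb p).
  move=> p; exact: (cid_spec (Hbnd p)).
pose c2 := fun p => INR n * (bb p * (INR n * be)).
have Hc20 : forall p, 0 <= c2 p.
  move=> p; rewrite /c2; have := pos_INR n; have := proj1 (Hbb p).
  move=> h1 h2; apply: Rmult_le_pos => //; apply: Rmult_le_pos => //.
  apply: Rmult_le_pos => //; lra.
pose rr := fun p => / (2 * c2 p + 2).
have Hrr : forall p, 0 < rr p.
  move=> p; rewrite /rr; apply: Rinv_0_lt_compat; have := Hc20 p; lra.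
have Hc2r : forall p, c2 p * rr p <= 1 / 2.
  move=> p; have := Hc20 p => h.
  have Hpos : 0 < 2 * c2 p + 2 by lra.
  rewrite /rr; apply: (Rmult_le_reg_r (2 * c2 p + 2)) => //.
  rewrite Rmult_assoc Rinv_l; lra.
pose c1 := fun p => INR n * (bb p * (RK + INR n * (al * rr p) + bb p)).
have Hc10 : forall p, 0 <= c1 p.
  move=> p; rewrite /c1; have := pos_INR n; have := proj1 (Hbb p); have := Hrr p.
  move=> h1 h2 h3; apply: Rmult_le_pos => //; apply: Rmult_le_pos => //.
  have : 0 <= INR n * (al * rr p).
    apply: Rmult_le_pos => //; apply: Rmult_le_pos => //; lra.
  lra.
have Key : forall p l x, L l -> K x -> K (act l x) -> ballv p (rr p) x ->
    forall k, Rabs (l.2 k) <= 2 * c1 p.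
  move=> p l x Ll Kx Klx Hpx.
  have [Y [HY0 [HY HYe]]] := vmaxv l.2.
  have Hz1 : act l p = act (hp p) l.2.
    rewrite -{1}(proj2 (Hhp p)) (comm_act _ (proj1 (Hhp p)) Ll) act0 //.
  have Hz2 : forall j, Rabs (act l p j) <= RK + INR n * ((al + be * Y) * rr p).
    move=> j.
    have -> : act l p j = act l x j + mulmv l.1 (fun m => p m - x m) j.
      rewrite /act /addv /mulmv.
      have -> : \big[Rplus/0]_(k < n) (l.1 j k * (p k - x k)) =
        \big[Rplus/0]_(k < n) (l.1 j k * p k - l.1 j k * x k).
        by apply: eq_bigr => k _; ring.
      rewrite sum_sub; ring.
    apply: Rle_trans (Rabs_triang _ _) _.
    have := HKb _ Klx j.
    have := @mv_bound n l.1 (fun m => p m - x m) (al + be * Y) (rr p) j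
      (Hlin l Y Ll HY) (fun m => Rlt_le _ _ (Hpx m)).
    lra.
  have Hy : forall k, l.2 k = mulmv (Bm p) (fun m => act l p m - (hp p).2 m) k.
    move=> k.
    have -> : (fun m => act l p m - (hp p).2 m) = mulmv (hp p).1 l.2.
      apply: functional_extensionality => m; rewrite Hz1 /act /addv; ring.
    by rewrite -mulmvA HBm mulmv_id.
  have Hyk : forall k, Rabs (l.2 k) <= c1 p + c2 p * rr p * Y.
    move=> k; rewrite Hy.
    have Hc : forall m, Rabs (act l p m - (hp p).2 m) <=
        RK + INR n * ((al + be * Y) * rr p) + bb p.
      move=> m; apply: Rle_trans (abs2m _ _) _.
      have := Hz2 m; have := (proj2 (proj2 (Hbb p))) m; lra.
    apply: Rle_trans (@mv_bound n (Bm p) _ (bb p) _ k (proj1 (proj2 (Hbb p))) Hc) _.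
    right; rewrite /c1 /c2; ring.
  have HYb : Y <= 2 * c1 p.
    case: HYe => [E|[k E]]; first by rewrite E; have := Hc10 p; lra.
    have := Hyk k; rewrite -E.
    have : c2 p * rr p * Y <= 1 / 2 * Y.
      apply: Rmult_le_compat_r; [exact: HY0 | exact: Hc2r].
    lra.
  move=> k; have := HY k; lra.
pose V := fun p x => K p /\ interior (@ballv n) p (rr p) x.
have HV : forall p, is_open (@ballv n) (V p).
  move=> p x [Kp Hx]; have [e [He H]] := @interior_open _ (@ballv n) p (rr p) (ballv_space n) x Hx.
  exists e; split => // y Hy; split => //; exact: H.
have HcV : forall x, K x -> exists p, V p x.
  move=> x Kx; exists x; split => //; exact: (@interior_in _ (@ballv n) x (rr x) (ballv_space n) (Hrr x)).
have [lp Hlp] := HK _ V HV HcV.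
have [Ys0 HYs0] := list_max (fun p => 2 * c1 p) lp.
pose Ys := Rmax 0 Ys0.
have HYs : 0 <= Ys := Rmax_l _ _.
have HS2 : forall l, L l -> forall x, K x -> K (act l x) -> forall k, Rabs (l.2 k) <= Ys.
  move=> l Ll x Kx Klx k.
  have [p [Hp [Kp Hint]]] := Hlp x Kx.
  have := Key p l x Ll Kx Klx (interior_ball (ballv_space n) Hint) k.
  have := HYs0 p Hp; have := Rmax_r 0 Ys0; rewrite /Ys /=; lra.
exists (Rmax Ys (al + be * Ys)); split.
- apply: Rle_trans HYs (Rmax_l _ _).
- move=> l Ll x Kx Klx; split.
  + move=> j i; apply: Rle_trans (Rmax_r _ _).
    exact: Hlin l Ys Ll (HS2 l Ll x Kx Klx) j i.
  + move=> k; apply: Rle_trans (Rmax_l _ _); exact: HS2 l Ll x Kx Klx k.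
Qed.

Lemma boxA_limit n M (p : aff n) (S : aff n -> Prop) :
  0 <= M -> (forall l, S l -> boxA M l) ->
  (forall e, 0 < e -> exists l, S l /\ balla p e l) -> boxA M p.
Proof.
move=> HM HS Hl; apply: (compact_closed (balla_space n) (compact_boxA (n:=n) HM)) => e He.
have [l [Sl Hpl]] := Hl e He; exists l; split => //; exact: HS.
Qed.

Lemma dir2 n (L : aff n -> Prop) :
  subgroup L -> transitive_on_Rn (centralizer L) -> closed_in_Aff L -> proper_action L.
Proof.
move=> HL HC Hcl K HK.
move: (HL) => [HLaff [HLid [HLcomp HLinv]]].
have [Bst [HB0 HBst]] := dir2_bound HL HC HK.
pose S := fun l => L l /\ exists x, K x /\ K (act l x).
have HSbox : forall l, S l -> boxA Bst l.
  move=> l [Ll [x [Kx Klx]]]; exact: HBst l Ll x Kx Klx.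
have [RK0 HRK0] := compact_bounded (fun _ => 0) (ballv_space n) HK.
pose RK := Rmax 0 RK0.
have HKb : forall x, K x -> forall i, Rabs (x i) <= RK.
  move=> x Kx i; have := HRK0 x Kx i; rewrite Rminus_0_l Rabs_Ropp.
  have := Rmax_r 0 RK0; rewrite /RK; lra.
apply: (compact_sub (balla_space n) (compact_boxA (n:=n) HB0) HSbox).
move=> p Hp.
have HpB : boxA Bst p := boxA_limit HB0 HSbox Hp.
have Hm := proj1 (proj2 (proj2 (proj2 (balla_space n)))).
have Hmv := proj1 (proj2 (proj2 (proj2 (ballv_space n)))).
pose Q := fun e l' => exists l, S l /\ balla p e l /\ L l' /\
  comp l l' = @aff_id n /\ comp l' l = @aff_id n.
have HQne : forall e, 0 < e -> exists l', Q e l'.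
  move=> e He; have [l [Sl Hl]] := Hp e He.
  have [l' [Ll' [E1 E2]]] := HLinv l (proj1 Sl).
  exists l', l; tauto.
have HQS : forall e l', Q e l' -> S l'.
  move=> e l' [l [[Ll [x [Kx Klx]]] [_ [Ll' [E1 E2]]]]]; split => //.
  exists (act l x); split => //; by rewrite -act_comp E2 act_id.
have HQK : forall e l', Q e l' -> boxA Bst l'.
  move=> e l' H; apply: HSbox; exact: HQS H.
have HQm : forall e1 e2 l', e1 <= e2 -> Q e1 l' -> Q e2 l'.
  move=> e1 e2 l' He [l [Sl [Hpl Hr]]]; exists l; split => //; split => //.
  exact: Hm Hpl.
have [g' Hg'] := cluster (balla_space n) (compact_boxA (n:=n) HB0) HQne HQK HQm.
have Hg'B : boxA Bst g'.
  apply: (boxA_limit (S := Q 1) HB0 (HQK 1)) => e He; exact: Hg' 1 e Rlt_0_1 He.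
pose c := INR n * (2 * Bst).
have Hc : 0 <= c.
  rewrite /c; apply: Rmult_le_pos; [exact: pos_INR | lra].
have E1 : comp p g' = @aff_id n.
  apply: (close_eq (balla_space n) Hc) => d Hd.
  have [l' [[l [Sl [Hpl [Ll' [C1 C2]]]]] Hgl']] := Hg' d d Hd Hd.
  rewrite -C1; have := comp_close Hd (HSbox l Sl) Hg'B Hpl Hgl'.
  move=> H; apply: (Hm _ _ _ _ _ H); right; rewrite /c; ring.
have E2 : comp g' p = @aff_id n.
  apply: (close_eq (balla_space n) Hc) => d Hd.
  have [l' [Hq Hgl']] := Hg' d d Hd Hd.
  have [l [Sl [Hpl [Ll' [C1 C2]]]]] := Hq.
  rewrite -C2; have := comp_close Hd (HQK _ _ Hq) HpB Hgl' Hpl.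
  move=> H; apply: (Hm _ _ _ _ _ H); right; rewrite /c; ring.
have Hpaff : is_aff p.
  exists g'.1; split; [exact: (f_equal fst E1) | exact: (f_equal fst E2)].
have Lp : L p.
  apply: NNPP => HnL; have [e [He Hno]] := Hcl p Hpaff HnL.
  have [l [Sl Hl]] := Hp e He.
  exact: Hno l (HLaff l (proj1 Sl)) Hl (proj1 Sl).
split => //.
pose Qx := fun e x => exists l, S l /\ balla p e l /\ K x /\ K (act l x).
have HQxne : forall e, 0 < e -> exists x, Qx e x.
  move=> e He; have [l [Sl Hl]] := Hp e He.
  have [x [Kx Klx]] := proj2 Sl; exists x, l; tauto.
have HQxK : forall e x, Qx e x -> K x.
  by move=> e x [l [_ [_ [Kx _]]]].
have HQxm : forall e1 e2 x, e1 <= e2 -> Qx e1 x -> Qx e2 x.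
  move=> e1 e2 x He [l [Sl [Hpl Hr]]]; exists l; split => //; split => //.
  exact: Hm Hpl.
have [xs Hxs] := cluster (ballv_space n) HK HQxne HQxK HQxm.
have Kxs : K xs.
  apply: (compact_closed (ballv_space n) HK) => e He.
  have [x [Hq Hb]] := Hxs 1 e Rlt_0_1 He; exists x; split => //; exact: HQxK Hq.
exists xs; split => //.
pose M' := Rmax RK Bst.
pose c' := INR n * (2 * M').
have Hc' : 0 <= c'.
  rewrite /c'; apply: Rmult_le_pos; first exact: pos_INR.
  have := Rmax_r RK Bst; rewrite /M'; lra.
apply: (compact_closed (ballv_space n) HK) => eps Heps.
have Hd : 0 < eps / (c' + 1) by apply: Rdiv_lt_0_compat; lra.
have [x [[l [Sl [Hpl [Kx Klx]]]] Hxsx]] := Hxs _ _ Hd Hd.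
exists (act l x); split => //.
have Hl1 : forall j k, Rabs (l.1 j k) <= M'.
  move=> j k; apply: Rle_trans (Rmax_r _ _); exact: (proj1 (HSbox l Sl)).
have Hx1 : forall k, Rabs (xs k) <= M'.
  move=> k; apply: Rle_trans (Rmax_l _ _); exact: HKb.
have := @act_close n p l xs x M' _ Hl1 Hx1 Hpl Hxsx.
move=> H; apply: (Hmv _ _ _ _ _ H); right.
have -> : INR n * (2 * M' * (eps / (c' + 1))) = c' * (eps / (c' + 1)) by rewrite /c'; ring.
field; lra.
Qed.

Theorem proposition7p2 (n : nat) (L : aff n -> Prop) :
  subgroup L ->
  transitive_on_Rn (centralizer L) ->
  (proper_action L <-> closed_in_Aff L).
Proof.
move=> HL HC; split; [exact: dir1 | exact: dir2].
Qed.
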